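(* Let $V:\mathbb{C}^2\to\mathcal{H}_j$ be the encoding isometry of a spin code which is $\mathsf{X}$-covariant, i.e. $D^j(\mathsf{X})V=V\mathsf{X}$, and suppose the codewords $|\bar0\rangle=V|0\rangle$, $|\bar1\rangle=V|1\rangle$ are real (real coefficients in the basis $|j,m\rangle$). Then for all $0\le k\le 2j$, $-k\le q\le k$: $\langle\bar0|T^k_q|\bar0\rangle=(-1)^{q+k}\langle\bar1|T^k_q|\bar1\rangle$, $\langle\bar0|T^k_q|\bar1\rangle=(-1)^{q+k}\langle\bar0|T^k_q|\bar1\rangle$, and $\langle\bar1|T^k_q|\bar0\rangle=(-1)^{q+k}\langle\bar1|T^k_q|\bar0\rangle$.
   Context: $\mathcal{H}_j$ is the spin-$j$ irrep of $\mathrm{SU}(2)$ with orthonormal basis $|j,m\rangle$, $|m|\le j$ ($J_z$-eigenbasis), $D^j(g)$ the action of $g\in\mathrm{SU}(2)$, and $\mathsf{X}=\begin{pmatrix}0&-i\\-i&0\end{pmatrix}$. Spherical tensors: $T^k_q=\sqrt{\tfrac{2k+1}{2j+1}}\sum_m C^{j\,m+q}_{k\,q,\,j\,m}|j,m+q\rangle\langle j,m|$ with Clebsch–Gordan coefficients $C$. *)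

(* Defs.v *)
(* Complex numbers: an arbitrary numClosedFieldType C
   (e.g. algC, or complex R for a real closed field R). *)
From HB Require Import structures.
From mathcomp Require Import all_boot all_order all_algebra.
Set Implicit Arguments. Unset Strict Implicit. Unset Printing Implicit Defensive.
Import Order.TTheory GRing.Theory Num.Theory.
Local Open Scope ring_scope.

Section Spin.
Variable C : numClosedFieldType.

(* Conventions: d = 2j (nat).  H_j = C^(d+1); basis vector with index
   i : 'I_(d.+1) is |j, m> with m = i - j  (i.e. i = j + m). *)

(* D^j(g): the spin-j representation realised on homogeneous polynomials of
   degree 2j in (x,y), x = |up>, y = |down>, |j,m> = x^(j+m) y^(j-m)/sqrt((j+m)!(j-m)!),
   g acting by x |-> a x + c y, y |-> b x + e y where g = [[a,b],[c,e]].
   Entry (r, c0) = <j, r-j | D^j(g) | j, c0-j>. *)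
Definition Dj (d : nat) (g : 'M[C]_2) : 'M[C]_(d.+1) :=
  let a := g ord0 ord0 in let b := g ord0 ord_max in
  let c := g ord_max ord0 in let e := g ord_max ord_max in
  \matrix_(r, c0)
    (sqrtC (((r`! * (d - r)`!)%:R) / ((c0`! * (d - c0)`!)%:R)) *
     \sum_(s < c0.+1) \sum_(t < (d - c0).+1 | (s + t == r)%N)
        ('C(c0, s)%:R * 'C(d - c0, t)%:R * a ^+ s * c ^+ (c0 - s)
          * b ^+ t * e ^+ (d - c0 - t))).

Definition Xmat : 'M[C]_2 := \matrix_(i, l) (if i == l then 0 else - 'i).

(* Clebsch-Gordan coefficient <j1 m1; j2 m2 | J M> (Condon-Shortley, Racah
   formula); all arguments are DOUBLED (tj1 = 2 j1, ...).  Returns 0 for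
   non-admissible arguments. *)
Definition ifact (x : int) : C := ((`|x|%N)`!)%:R.
Definition half (x : int) : int := (x %/ 2)%Z.

Definition CG (tj1 tm1 tj2 tm2 tJ tM : int) : C :=
  if [&& `|tm1| <= tj1, `|tm2| <= tj2, `|tM| <= tJ,
         (2 %| tj1 + tm1)%Z, (2 %| tj2 + tm2)%Z, (2 %| tJ + tM)%Z,
         (2 %| tj1 + tj2 + tJ)%Z, `|tj1 - tj2| <= tJ, tJ <= tj1 + tj2
         & tM == tm1 + tm2]
  then
    sqrtC ((tJ + 1)%:~R * ifact (half (tJ + tj1 - tj2))
            * ifact (half (tJ - tj1 + tj2)) * ifact (half (tj1 + tj2 - tJ))
            / ifact (half (tj1 + tj2 + tJ) + 1))
    * sqrtC (ifact (half (tJ + tM)) * ifact (half (tJ - tM))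
             * ifact (half (tj1 - tm1)) * ifact (half (tj1 + tm1))
             * ifact (half (tj2 - tm2)) * ifact (half (tj2 + tm2)))
    * \sum_(k < (`|half (tj1 + tj2 - tJ)|%N).+1)
        (let k' := (k : nat)%:Z in
         let a1 := half (tj1 + tj2 - tJ) - k' in
         let a2 := half (tj1 - tm1) - k' in
         let a3 := half (tj2 + tm2) - k' in
         let a4 := half (tJ - tj2 + tm1) + k' in
         let a5 := half (tJ - tj1 - tm2) + k' in
         if [&& 0 <= a1, 0 <= a2, 0 <= a3, 0 <= a4 & 0 <= a5] then
           (-1) ^+ k / (ifact k' * ifact a1 * ifact a2 * ifact a3
                         * ifact a4 * ifact a5)
         else 0)
  else 0.

(* Spherical tensor T^k_q on H_j (d = 2j):
   T^k_q = sqrt((2k+1)/(2j+1)) sum_m C^{j m+q}_{k q, j m} |j,m+q><j,m|. *)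
Definition Tkq (d k : nat) (q : int) : 'M[C]_(d.+1) :=
  \matrix_(r, c0)
    (sqrtC ((2 * k + 1)%:R / (d.+1)%:R) *
     CG (2 * k)%:Z (2 * q) d%:Z (2 * (c0 : nat)%:Z - d%:Z)
        d%:Z (2 * (r : nat)%:Z - d%:Z)).

Definition mel (n : nat) (a : 'cV[C]_n) (T : 'M[C]_n) (b : 'cV[C]_n) : C :=
  ((map_mx Num.conj a)^T *m T *m b) ord0 ord0.

End Spin.

(* Main.v *)
Require Import Defs.
From mathcomp Require Import all_boot all_order all_algebra.
From mathcomp Require Import zify ring lra.
Import Order.TTheory GRing.Theory Num.Theory.
Local Open Scope ring_scope.



Section S.
Variable C : numClosedFieldType.

Lemma sgn_add (a b : int) : (-1 : C) ^ (a + b) = (-1) ^ a * (-1) ^ b.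
Proof. by rewrite expfzDr // oppr_eq0 oner_eq0. Qed.

Lemma sgn_sq (a : int) : (-1 : C) ^ a * (-1) ^ a = 1.
Proof.
rewrite -sgn_add.
have -> : a + a = 2%:Z * a by ring.
rewrite -exprz_exp.
have -> : (-1 : C) ^ (2%:Z) = 1 by rewrite -exprnP sqrrN expr1n.
by rewrite exp1rz.
Qed.

Lemma sgn_opp (a : int) : (-1 : C) ^ (- a) = (-1) ^ a.
Proof.
have := sgn_sq a; have := sgn_add a (- a); rewrite subrr expr0z => h1 h2.
set u := (-1 : C) ^ a in h1 h2 *; set v := (-1 : C) ^ (- a) in h1 *.
by rewrite -[v]mul1r -h2 -mulrA -h1 mulr1.
Qed.

Lemma window (h : int -> C) (n e : nat) :
  (forall t, t < 0 -> h t = 0) -> (forall t, n%:Z < t -> h t = 0) ->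
  \sum_(i < n + (n.+1 + e)) h (i%:Z - n%:Z) = \sum_(i < n.+1) h i%:Z.
Proof.
move=> h0 h1; rewrite big_split_ord /= big1 ?add0r; last first.
  move=> i _; apply: h0 => /=; have := ltn_ord i; lia.
rewrite big_split_ord /= [X in _ + X]big1 ?addr0; last first.
  move=> i _; apply: h1 => /=; lia.
by apply: eq_bigr => i _ /=; congr h; lia.
Qed.

Lemma sum_reflect (f g : int -> C) (n c : nat) :
  (forall t, t < 0 -> f t = 0) -> (forall t, n%:Z < t -> f t = 0) ->
  (forall t, t < 0 -> g t = 0) -> (forall t, n%:Z < t -> g t = 0) ->
  (forall t, g t = f (c%:Z - t)) ->
  \sum_(i < n.+1) g i%:Z = \sum_(i < n.+1) f i%:Z.
Proof.
move=> f0 f1 g0 g1 gf.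
rewrite -(@window g n c g0 g1) -(@window f n c f0 f1).
rewrite (reindex_inj rev_ord_inj) /=.
apply: eq_bigr => i _; rewrite gf; congr f.
have := ltn_ord i; lia.
Qed.
End S.



Section S.
Variable C : numClosedFieldType.

Lemma halfE (z : int) : Defs.half (z * 2) = z.
Proof. by rewrite /Defs.half mulzK. Qed.

Definition fR (K D q x : int) (t : int) : C :=
  if 0 <= t then
    if [&& 0 <= K - t, 0 <= K - q - t, 0 <= x - t, 0 <= q + t
           & 0 <= D - K - x + t]
    then (-1) ^ t /
         (ifact C t * ifact C (K - t) * ifact C (K - q - t) *
          ifact C (x - t) * ifact C (q + t) * ifact C (D - K - x + t))
    else 0
  else 0.

Definition fL (K D q x : int) (t : int) : C :=
  if 0 <= t then
    if [&& 0 <= K - t, 0 <= K - q - t, 0 <= D - x - q - t, 0 <= q + t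
           & 0 <= x + q - K + t]
    then (-1) ^ t /
         (ifact C t * ifact C (K - t) * ifact C (K - q - t) *
          ifact C (D - x - q - t) * ifact C (q + t) *
          ifact C (x + q - K + t))
    else 0
  else 0.

Lemma ifact_neq0 (z : int) : ifact C z != 0.
Proof. by rewrite /ifact pnatr_eq0 -lt0n fact_gt0. Qed.

Lemma ifand (a b : bool) (v : C) :
  (if a then (if b then v else 0) else 0) = if a && b then v else 0.
Proof. by case: a. Qed.

Lemma fLR (K D q x t : int) :
  fL K D q x t = (-1) ^ (q + K) * fR K D q x (K - q - t).
Proof.
rewrite /fL /fR !ifand.
have -> : [&& 0 <= K - q - t, 0 <= K - (K - q - t), 0 <= K - q - (K - q - t),
   0 <= x - (K - q - t), 0 <= q + (K - q - t)
   & 0 <= D - K - x + (K - q - t)] =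
   [&& 0 <= t, 0 <= K - t, 0 <= K - q - t, 0 <= D - x - q - t, 0 <= q + t
           & 0 <= x + q - K + t].
  by apply/idP/idP => /and5P [h1 h2 h3 h4 /andP [h5 h6]]; apply/and5P; split; try lia; apply/andP; split; lia.
case: ifP => _; last by rewrite mulr0.
rewrite (_ : K - (K - q - t) = q + t); last by ring.
rewrite (_ : K - q - (K - q - t) = t); last by ring.
rewrite (_ : x - (K - q - t) = x + q - K + t); last by ring.
rewrite (_ : q + (K - q - t) = K - t); last by ring.
rewrite (_ : D - K - x + (K - q - t) = D - x - q - t); last by ring.
have -> : (-1 : C) ^ (K - q - t) = (-1) ^ (q + K) * (-1) ^ t.
  rewrite (_ : K - q - t = (- t) + (- (q + K)) + (K + K)); last by ring.
  rewrite !sgn_add !sgn_opp sgn_add sgn_sq mulr1; ring.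
have e2 := sgn_sq C (q + K).
rewrite !mulrA e2 mul1r; congr (_ / _); ring.
Qed.

Lemma KL (d k : nat) (q x y : int) : 0 <= x <= d%:Z -> 0 <= y <= d%:Z ->
  CG C (2*k)%:Z (2*q) d (d%:Z - 2*y) d (d%:Z - 2*x) =
  (-1) ^ (q + k%:Z) * CG C (2*k)%:Z (2*q) d (2*x - d%:Z) d (2*y - d%:Z).
Proof.
move=> hx hy.
have [eyx|nyx] := eqVneq y (x + q); last first.
  rewrite /CG.
  have -> : (d%:Z - 2 * x == 2 * q + (d%:Z - 2 * y)) = false.
    apply/eqP => E; move/eqP: nyx; apply; lia.
  have -> : (2 * y - d%:Z == 2 * q + (2 * x - d%:Z)) = false.
    apply/eqP => E; move/eqP: nyx; apply; lia.
  by rewrite !andbF mulr0.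
subst y.
rewrite /CG !PoszM.
set K := k%:Z. set D := d%:Z.
have hv : forall (E v : int), E = v * 2 -> Defs.half E = v.
  by move=> E v ->; rewrite halfE.
rewrite (hv (2%:Z * K + D - D) K); last by ring.
rewrite (hv (2%:Z * K - 2 * q) (K - q)); last by ring.
rewrite (hv (2%:Z * K + 2 * q) (K + q)); last by ring.
rewrite (hv (D - D + 2 * q) q); last by ring.
rewrite (hv (D + (D - 2 * x)) (D - x)); last by ring.
rewrite (hv (D - (D - 2 * x)) x); last by ring.
rewrite (hv (D - (D - 2 * (x + q))) (x + q)); last by ring.
rewrite (hv (D + (D - 2 * (x + q))) (D - x - q)); last by ring.
rewrite (hv (D - 2%:Z * K - (D - 2 * (x + q))) (x + q - K)); last by ring.
rewrite (hv (D + (2 * (x + q) - D)) (x + q)); last by ring.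
rewrite (hv (D - (2 * (x + q) - D)) (D - x - q)); last by ring.
rewrite (hv (D - (2 * x - D)) (D - x)); last by ring.
rewrite (hv (D + (2 * x - D)) x); last by ring.
rewrite (hv (D - 2%:Z * K - (2 * x - D)) (D - K - x)); last by ring.
have dv : forall z : int, (2 %| z * 2)%Z by move=> z; apply/dvdzP; exists z.
rewrite (_ : D + (D - 2 * (x + q)) = (D - x - q) * 2); last by ring.
rewrite (_ : D + (D - 2 * x) = (D - x) * 2); last by ring.
rewrite (_ : D + (2 * (x + q) - D) = (x + q) * 2); last by ring.
rewrite (_ : D + (2 * x - D) = x * 2); last by ring.
rewrite !dv.
have -> : `|D - 2 * (x + q)| <= D by lia.
have -> : `|D - 2 * x| <= D by lia.
have -> : `|2 * (x + q) - D| <= D by lia.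
have -> : `|2 * x - D| <= D by lia.
have -> : D - 2 * x == 2 * q + (D - 2 * (x + q)) by apply/eqP; ring.
have -> : 2 * (x + q) - D == 2 * q + (2 * x - D) by apply/eqP; ring.
case: ifP => hG; last by rewrite mulr0.
have hq : `|q| <= K.
  move/andP: hG => [h _].
  have h2 : `|2 * q| = 2 * `|q| by rewrite normrM.
  rewrite h2 in h. clear -h. rewrite /K in h *.
  by rewrite -(@ler_pM2l _ 2%:Z).
clear hG hv dv.
have hq' : q <= K by apply: le_trans (ler_norm q) hq.
have ceq : (`|K - q|%N)%:Z = K - q by rewrite gez0_abs // subr_ge0.
have eP : ifact C (D - x) * ifact C x * ifact C (K - q) * ifact C (K + q) *
   ifact C (x + q) * ifact C (D - x - q) = ifact C (x + q) * ifact C (D - x - q)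
   * ifact C (K - q) * ifact C (K + q) * ifact C (D - x) * ifact C x by ring.
rewrite eP.
unfold K, D in *; clear K D.
rewrite [in LHS](eq_bigr (fun i : 'I_(`|k%:Z|.+1) => fL k d q x i)); last first.
  by move=> i _; rewrite /fL (le0z_nat i).
rewrite [in RHS](eq_bigr (fun i : 'I_(`|k%:Z|.+1) => fR k d q x i)); last first.
  by move=> i _; rewrite /fR (le0z_nat i).
have -> : \sum_(k0 < k.+1) fL k d q x k0 =
          \sum_(k0 < k.+1) (fun t => (-1) ^ (q + k%:Z) * fR k d q x t) k0.
  apply: (@sum_reflect C (fun t => (-1) ^ (q + k%:Z) * fR k d q x t) (fL k d q x) k `|k%:Z - q|%N).
  - by move=> t ht; rewrite /fR lt_geF ?mulr0.
  - move=> t ht; rewrite /fR; case: ifP => _; last by rewrite mulr0.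
    by rewrite ifN ?mulr0 //; apply/negP => /and5P [h1 _ _ _ _]; lia.
  - by move=> t ht; rewrite /fL lt_geF.
  - move=> t ht; rewrite /fL; case: ifP => // _.
    by rewrite ifN //; apply/negP => /and5P [h1 _ _ _ _]; lia.
  - by move=> t; rewrite ceq fLR.
rewrite -mulr_sumr; ring.
Qed.
End S.



Section S.
Variable C : numClosedFieldType.

Lemma DjX (d : nat) (r c : 'I_d.+1) :
  Dj d (Xmat C) r c = if (r == (d - c)%N :> nat) then (-'i)^+d else 0.
Proof.
have Xa : Xmat C ord0 ord0 = 0 by rewrite /Xmat mxE.
have Xb : Xmat C ord0 ord_max = - 'i by rewrite /Xmat mxE.
have Xc : Xmat C ord_max ord0 = - 'i by rewrite /Xmat mxE.
have Xe : Xmat C ord_max ord_max = 0 by rewrite /Xmat mxE.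
rewrite /Dj mxE /= Xa Xb Xc Xe.
rewrite big_ord_recl /= [X in _ + X]big1 ?addr0; last first.
  by move=> s _; apply: big1 => t _; rewrite expr0n /= !(mulr0, mul0r).
have hc := ltn_ord c; have hr := ltn_ord r.
case: eqP => hrc; last first.
  rewrite big1 ?mulr0 // => t /eqP ht.
  have [h|h] := eqVneq (d - c - t)%N 0%N; last by rewrite (expr0n _ (d - c - t)%N) (negbTE h) mulr0.
  exfalso; apply: hrc; have := ltn_ord t; rewrite add0n in ht; lia.
rewrite big_mkcond (bigD1 ord_max) //= big1 ?addr0; last first.
  move=> t /eqP ht; case: ifP => // _.
  have [h|h] := eqVneq (d - c - t)%N 0%N; last by rewrite (expr0n _ (d - c - t)%N) (negbTE h) mulr0.
  exfalso; apply: ht; apply: val_inj => /=; have := ltn_ord t; lia.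
rewrite add0n hrc eqxx bin0 binn subn0 subnn !expr0 !mul1r mulr1 -exprD subnKC; last lia.
have -> : (d - (d - c) = c)%N by lia.
by rewrite mulnC divff ?sqrtC1 ?mul1r // pnatr_eq0 -lt0n muln_gt0 !fact_gt0.
Qed.
End S.



Section S.
Variable C : numClosedFieldType.

Definition bil {n} (T : 'M[C]_n) (a b : 'I_n -> C) :=
  \sum_j \sum_i a i * T i j * b j.

Lemma mel_bil n (a b : 'cV[C]_n) T : (forall i, a i 0 \is Num.real) ->
  mel a T b = bil T (fun i => a i 0) (fun i => b i 0).
Proof.
move=> ha; rewrite /mel /bil mxE; apply: eq_bigr => j _.
rewrite mxE big_distrl; apply: eq_bigr => i _.
by rewrite !mxE conj_Creal.
Qed.

Lemma BR n (T : 'M[C]_n) s e (a b a' b' : 'I_n -> C) :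
  (forall i j, T (rev_ord j) (rev_ord i) = s * T i j) -> e * e = 1 ->
  (forall i, a' i = e * a (rev_ord i)) -> (forall i, b' i = e * b (rev_ord i)) ->
  bil T a' b' = s * bil T b a.
Proof.
move=> hT he ha hb; rewrite /bil exchange_big (reindex_inj rev_ord_inj) mulr_sumr.
apply: eq_bigr => i _ /=.
rewrite (reindex_inj rev_ord_inj) mulr_sumr; apply: eq_bigr => j _ /=.
rewrite ha hb !rev_ordK hT.
rewrite (_ : e * a i * (s * T j i) * (e * b j) = (e * e) * (s * (b j * T j i * a i))); last by ring.
by rewrite he mul1r.
Qed.
End S.

Theorem lemmaS6 (C : numClosedFieldType) (d : nat) (V : 'M[C]_(d.+1, 2))
  (Hiso : (map_mx Num.conj V)^T *m V = 1%:M)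
  (Hcov : Dj d (Xmat C) *m V = V *m Xmat C)
  (Hreal : forall (i : 'I_d.+1) (l : 'I_2), V i l \is Num.real) :
  forall (k : nat) (q : int), (k <= d)%N -> `|q| <= k%:Z ->
    let T := Tkq C d k q in
    let c0 := col ord0 V in
    let c1 := col ord_max V in
    [/\ mel c0 T c0 = (-1) ^ (q + k%:Z) * mel c1 T c1,
        mel c0 T c1 = (-1) ^ (q + k%:Z) * mel c0 T c1
      & mel c1 T c0 = (-1) ^ (q + k%:Z) * mel c1 T c0].
Proof.
move=> k q hk hq T c0 c1.
set s := (-1 : C) ^ (q + k%:Z).
have TS : forall i j : 'I_d.+1, T (rev_ord j) (rev_ord i) = s * T i j.
  move=> i j; rewrite /T /Tkq !mxE.
  have e1 : 2 * ((rev_ord i : nat)%:Z) - d%:Z = d%:Z - 2 * (i : nat)%:Z.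
    have := ltn_ord i; rewrite /= => hi; lia.
  have e2 : 2 * ((rev_ord j : nat)%:Z) - d%:Z = d%:Z - 2 * (j : nat)%:Z.
    have := ltn_ord j; rewrite /= => hi; lia.
  have hx : 0 <= (j : nat)%:Z <= d%:Z by have := ltn_ord j; lia.
  have hy : 0 <= (i : nat)%:Z <= d%:Z by have := ltn_ord i; lia.
  by rewrite e1 e2 (@KL C d k q _ _ hx hy) mulrCA.
set mu := (- 'i : C) ^+ d.
have DV : forall i l, (Dj d (Xmat C) *m V) i l = mu * V (rev_ord i) l.
  move=> i l; rewrite mxE (bigD1 (rev_ord i)) //= DjX.
  rewrite (_ : (i == (d - rev_ord i)%N :> nat) = true); last first.
    by apply/eqP; rewrite /=; have := ltn_ord i; lia.
  rewrite big1 ?addr0 // => c hc; rewrite DjX; case: eqP => h; last by rewrite mul0r.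
  exfalso; move/eqP: hc; apply; apply: val_inj => /=; have := ltn_ord c; have := ltn_ord i; lia.
have VX0 : forall i, (V *m Xmat C) i ord0 = - 'i * V i ord_max.
  move=> i; rewrite mxE !big_ord_recl big_ord0 /Xmat !mxE /=.
  have -> : lift ord0 (ord0 : 'I_1) = ord_max :> 'I_2 by apply: val_inj.
  by rewrite mulr0 add0r addr0 mulrC.
have VX1 : forall i, (V *m Xmat C) i ord_max = - 'i * V i ord0.
  move=> i; rewrite mxE !big_ord_recl big_ord0 /Xmat !mxE /=.
  have -> : lift ord0 (ord0 : 'I_1) = ord_max :> 'I_2 by apply: val_inj.
  by rewrite mulr0 addr0 addr0 mulrC.
set e := 'i * mu.
have iK : forall x : C, 'i * (- 'i * x) = x.
  by move=> x; rewrite mulrA mulrN mulCii opprK mul1r.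
have hv1 : forall i, V i ord_max = e * V (rev_ord i) ord0.
  move=> i; have h : (Dj d (Xmat C) *m V) i ord0 = (V *m Xmat C) i ord0 by rewrite Hcov.
  rewrite DV VX0 in h.
  by rewrite /e -mulrA h iK.
have hv0 : forall i, V i ord0 = e * V (rev_ord i) ord_max.
  move=> i; have h : (Dj d (Xmat C) *m V) i ord_max = (V *m Xmat C) i ord_max by rewrite Hcov.
  rewrite DV VX1 in h.
  by rewrite /e -mulrA h iK.
have he : e * e = 1.
  apply/eqP; apply/negPn/negP => hne.
  have z : forall i, V i ord0 = 0.
    move=> i; have := hv0 i; rewrite hv1 rev_ordK mulrA => h.
    have : (e * e - 1) * V i ord0 == 0 by rewrite mulrBl -h mul1r subrr.
    by rewrite mulf_eq0 subr_eq0 (negbTE hne) /= => /eqP.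
  have h : (((map_mx Num.conj V)^T *m V) ord0 ord0 = (1%:M : 'M[C]_2) ord0 ord0) by rewrite Hiso.
  move: h; rewrite !mxE big1 ?eqxx.
    by move/eqP; rewrite eq_sym oner_eq0.
  by move=> i _; rewrite !mxE z mulr0.
have r0 : forall i, c0 i 0 \is Num.real by move=> i; rewrite /c0 mxE Hreal.
have r1 : forall i, c1 i 0 \is Num.real by move=> i; rewrite /c1 mxE Hreal.
rewrite !mel_bil //.
have a0 : forall i, (fun i => c0 i 0) i = e * (fun i => c1 i 0) (rev_ord i).
  by move=> i; rewrite /c0 /c1 !mxE hv0.
have a1 : forall i, (fun i => c1 i 0) i = e * (fun i => c0 i 0) (rev_ord i).
  by move=> i; rewrite /c0 /c1 !mxE hv1.
split.
- apply: (etrans _ (congr1 (GRing.mul s) (esym (@BR C _ _ _ _ _ _ _ _ TS he a1 a1)))).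
  by rewrite mulrA sgn_sq mul1r.
- exact: (@BR C _ _ _ _ _ _ _ _ TS he a0 a1).
- exact: (@BR C _ _ _ _ _ _ _ _ TS he a1 a0).
Qed.
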